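(* Let $\mathcal V=\{v^{(1)},\dots,v^{(p)}\}\subset(\mathbb{R}\cup\{-\infty\})^n$ and let $V$ be the $n\times p$ matrix with columns $v^{(k)}$; assume $V$ has no row and no column identically equal to $-\infty$. Let $T$ be the operator $$T_i(x)=\inf_{k\in[p],\,V_{ik}\neq-\infty}\Big[-V_{ik}+\max_{j\in[n],\,j\neq i}(V_{jk}+x_j)\Big],\qquad i\in[n].$$ Then for all $\lambda\in[-\infty,0]$ and all $b\in(\mathbb{R}\cup\{-\infty\})^n$ not identically $-\infty$, $$T(b)\ge\lambda+b\iff\operatorname{dist}_H(\mathcal V,\mathcal H_b)\le-\lambda.$$
   Context: $\mathbb{R}_{\max}=\mathbb{R}\cup\{-\infty\}$, $-\infty+c=-\infty$, $\max\emptyset=-\infty$. For $b$ not identically $-\infty$, $\mathcal H_b=\{y\in\mathbb{R}_{\max}^n:\max_i(b_i+y_i)\text{ is achieved at least twice}\}$. Hilbert's projective metric: $d(x,y)=\inf\{\lambda-\mu:\lambda,\mu\in\mathbb{R},\ \mu+y_i\le x_i\le\lambda+y_i\ \forall i\}\in[0,+\infty]$ (and $d(\bot,\bot)=0$). For sets $A,B$, $\operatorname{dist}_H(A,B)=\sup_{a\in A}\inf_{y\in B}d(a,y)$. *)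

(* Defs.v *)
(* R_max = \bar R restricted to values <> +oo. *)
From HB Require Import structures.
From mathcomp Require Import all_boot all_order all_algebra.
From mathcomp Require Import all_classical all_reals ereal.
Set Implicit Arguments. Unset Strict Implicit. Unset Printing Implicit Defensive.
Import Order.TTheory GRing.Theory Num.Theory.
Local Open Scope classical_set_scope.
Local Open Scope ereal_scope.

Section Defs.
Variable R : realType.

Definition rmax_vec (n : nat) (x : 'I_n -> \bar R) : Prop := forall i, x i != +oo.

Definition tmax (n : nat) (b y : 'I_n -> \bar R) : \bar R :=
  \big[Order.max/-oo]_(i < n) (b i + y i).

Definition Hyp (n : nat) (b : 'I_n -> \bar R) : set ('I_n -> \bar R) :=
  [set y | rmax_vec y /\
     exists i j : 'I_n, i != j /\ b i + y i = tmax b y /\ b j + y j = tmax b y].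

(* Hilbert's projective metric, with d(bot,bot) = 0 and inf of empty = +oo *)
Definition hilbert (n : nat) (x y : 'I_n -> \bar R) : \bar R :=
  if [forall i, (x i == -oo) && (y i == -oo)] then 0
  else ereal_inf [set z | exists lam mu : R, z = (lam - mu)%:E /\
         forall i, mu%:E + y i <= x i /\ x i <= lam%:E + y i].

Definition distH (n : nat) (A B : set ('I_n -> \bar R)) : \bar R :=
  ereal_sup [set ereal_inf [set hilbert a y | y in B] | a in A].

Definition cols (n p : nat) (V : 'I_n -> 'I_p -> \bar R) : set ('I_n -> \bar R) :=
  [set fun i => V i k | k in [set: 'I_p]].

Definition Top (n p : nat) (V : 'I_n -> 'I_p -> \bar R) (x : 'I_n -> \bar R)
  (i : 'I_n) : \bar R :=
  \big[Order.min/+oo]_(k < p | V i k != -oo)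
     (- V i k + \big[Order.max/-oo]_(j < n | j != i) (V j k + x j)).

End Defs.

(* Main.v *)
Require Import Defs.
From mathcomp Require Import all_boot all_order all_algebra.
From mathcomp Require Import all_classical all_reals ereal.
From mathcomp Require Import lra.
Import Order.TTheory GRing.Theory Num.Theory.
Local Open Scope classical_set_scope.
Local Open Scope ereal_scope.

Section Helpers.
Variable R : realType.
Variable n : nat.

Lemma bigmax_attained (P : pred 'I_n) (F : 'I_n -> \bar R) :
  \big[Order.max/-oo]_(i | P i) F i != -oo ->
  exists2 i, P i & F i = \big[Order.max/-oo]_(i | P i) F i.
Proof.
pose K x := x = -oo \/ exists2 i, P i & F i = x.
have : K (\big[Order.max/-oo]_(i | P i) F i).
  apply: (big_ind K); first by left.
  - move=> x y Hx Hy; rewrite maxEle; case: ifP => _; [exact: Hy | exact: Hx].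
  - by move=> i Pi; right; exists i.
by case=> [->|//].
Qed.

Lemma bigmax_neqy (P : pred 'I_n) (F : 'I_n -> \bar R) :
  (forall i, P i -> F i != +oo) -> \big[Order.max/-oo]_(i | P i) F i != +oo.
Proof.
move=> H; apply: (big_ind (fun x => x != +oo)) => //.
by move=> x y Hx Hy; rewrite maxEle; case: ifP.
Qed.

Lemma hilbert_le (v y : 'I_n -> \bar R) (l m : R) : (0 <= l - m)%R ->
  (forall i, m%:E + y i <= v i /\ v i <= l%:E + y i) -> hilbert v y <= (l - m)%:E.
Proof.
move=> lm H; rewrite /hilbert; case: ifP => _; first by rewrite lee_fin.
by apply: ereal_inf_lbound; exists l, m.
Qed.

End Helpers.

Section Col.
Variable R : realType.
Variable n : nat.

Lemma col_dir2 (v b : 'I_n -> \bar R) (lam : \bar R) (Hlam : lam <= 0)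
  (Hb : rmax_vec b) (Hv : forall i, v i != +oo) :
  ereal_inf [set hilbert v y | y in Hyp b] <= - lam ->
  forall i, v i != -oo ->
    lam + b i <= - v i + \big[Order.max/-oo]_(j < n | j != i) (v j + b j).
Proof.
move=> Hinf i vi.
move: Hlam Hinf; case: lam => [r | | ]; last by move=> _ _; rewrite addNye leNye.
  2: by rewrite leye_eq.

move=> Hr Hinf.
case Ebi: (b i) => [bi | | ]; last by rewrite addeNy leNye.
  2: by have := Hb i; rewrite Ebi.
case Evi: (v i) => [vi' | | ]; last by move: vi; rewrite Evi.
  2: by have := Hv i; rewrite Evi.
move=> {vi}; rename vi' into vi.
set M := \big[Order.max/-oo]_(j < n | j != i) (v j + b j).
have claim : forall y, Hyp b y -> (bi + vi)%:E - M <= hilbert v y.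
  move=> y [Hyr [a [a' [aa' [Ha Ha']]]]].
  rewrite /hilbert; case: ifP => [/forallP/(_ i)|_]; first by rewrite Evi.
  apply: le_ereal_inf_tmp => _ [l [m [-> Hlm]]].
  have [c [ci Hc]] : exists c, c != i /\ b c + y c = tmax b y.
    case: (eqVneq a i) => [ai|ai]; last by exists a.
    by exists a'; split => //; rewrite -ai eq_sym.
  have [yi Eyi] : exists yi, y i = yi%:E.
    have := (Hlm i).2; have := Hyr i; rewrite Evi.
    by case: (y i) => [yi _ _| // | //]; exists yi.
  have Hyi : (vi <= l + yi)%R by have := (Hlm i).2; rewrite Evi Eyi.
  have key : (bi + vi - l + m)%:E <= M.
    apply: (@le_trans _ _ (v c + b c)); last first.
      by apply: le_bigmax_cond.
    rewrite addeC.
    apply: (@le_trans _ _ (b c + (m%:E + y c))); last first.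
      by apply: leeD2l; exact: (Hlm c).1.
    rewrite addeCA Hc.
    apply: (@le_trans _ _ (m%:E + (b i + y i))); last first.
      apply: leeD2l; exact: (le_bigmax _ (fun i => b i + y i) i).
    by rewrite Ebi Eyi -!EFinD lee_fin; lra.
  move: key; case: M => [mm | | ] /=.
  - by rewrite !lee_fin => ?; lra.
  - by rewrite leNye.
  - by rewrite leeNy_eq.
have H1 : (bi + vi)%:E - M <= ereal_inf [set hilbert v y | y in Hyp b].
  by apply: le_ereal_inf_tmp => _ [y Hy <-]; exact: claim.
move: (le_trans H1 Hinf); clear claim H1.
case: M => [mm | | ] /=.
- by rewrite !lee_fin => ?; lra.
- by rewrite leey.
- by [].
Qed.

Lemma col_dir1 (v b : 'I_n -> \bar R) (lam : \bar R) (Hlam : lam <= 0)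
  (Hb : rmax_vec b) (Hv : forall i, v i != +oo)
  (Hvnz : exists i, v i != -oo) (Hbnz : exists i, b i != -oo) :
  (forall i, v i != -oo ->
    lam + b i <= - v i + \big[Order.max/-oo]_(j < n | j != i) (v j + b j)) ->
  ereal_inf [set hilbert v y | y in Hyp b] <= - lam.
Proof.
move=> Hc.
move: Hlam Hc; case: lam => [r | | ]; last by move=> _ _; rewrite leey.
  2: by rewrite leye_eq.
move=> Hr Hc; have Hr0 : (r <= 0)%R by [].

have Hsum : forall i, b i + v i != +oo.
  by move=> i; move: (Hb i) (Hv i); case: (b i); case: (v i).
have : tmax b v != +oo by apply: bigmax_neqy => i _; exact: Hsum.
case Em: (tmax b v) => [mm | | ] // _.
-
  have [i0 _ Hi0] : exists2 i, true & b i + v i = tmax b v.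
    by apply: (@bigmax_attained R n (fun _ => true) (fun i => b i + v i)); change (tmax b v != -oo); rewrite Em.
  rewrite Em in Hi0.
  case Ebi0: (b i0) Hi0 => [bi0 | | ]; last by [].
    2: by move: (Hb i0); rewrite Ebi0.
  case Evi0: (v i0) => [vi0 | | ] Hi0; last by move: Hi0; rewrite addeNy.
    2: by move: (Hv i0); rewrite Evi0.
  have := Hc i0; rewrite Evi0 => /(_ isT).
  set M0 := \big[Order.max/-oo]_(j < n | j != i0) (v j + b j).
  have M0ny : M0 != +oo.
    by apply: bigmax_neqy => j _; rewrite addeC; exact: Hsum.
  have [j0 j0i0 Hj0] : exists2 j, j != i0 & v j + b j = M0.
    apply: bigmax_attained; apply/negP => /eqP E.
    by move: Hc => /(_ i0); rewrite Evi0 E addeNy Ebi0 leeNy_eq => /(_ isT).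
  case EM0: M0 M0ny Hj0 => [mj | | ] //; last by move=> _ _; rewrite Ebi0 addeNy leeNy_eq.
  move=> _ Hj0 HC.
  have Hmjm : (mj <= mm)%R.
    rewrite -lee_fin -Em -Hj0 addeC.
    exact: (le_bigmax _ (fun i => b i + v i) j0).
  have Hg : (mm - mj <= - r)%R.
    move: HC; rewrite Ebi0 /= lee_fin; move: Hi0 => [<-]; lra.
  pose g := (mm - mj)%R.
  pose y := fun i => if i == i0 then (vi0 - g)%:E else v i.
  have Hy : Hyp b y.
    split; first by move=> i; rewrite /y; case: ifP => // _; exact: Hv.
    have Htm : tmax b y = mj%:E.
      apply/eqP; rewrite eq_le; apply/andP; split.
        apply: bigmax_le; first exact: leNye.
        move=> i _; rewrite /y; case: eqP => [->|/eqP ne].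
          rewrite Ebi0 lee_fin /g; move: Hi0 => [<-]; lra.
        rewrite addeC -EM0; exact: le_bigmax_cond.
      apply: le_trans (le_bigmax _ (fun i => b i + y i) j0).
      by rewrite /y (negbTE j0i0) addeC Hj0.
    exists i0, j0; split; first by rewrite eq_sym.
    rewrite Htm; split.
      rewrite /y eqxx Ebi0 /g; move: Hi0 => [<-]; congr (_%:E); lra.
    by rewrite /y (negbTE j0i0) addeC Hj0.
  apply: (@le_trans _ _ (hilbert v y)); first by apply: ereal_inf_lbound; exists y.
  apply: (@le_trans _ _ ((g - 0)%R%:E)); first apply: hilbert_le.
  + rewrite subr0 /g; lra.
  + move=> i; rewrite /y; case: eqP => [->|_].
      rewrite Evi0 /= !lee_fin /g; split; lra.
    split; first by rewrite add0e.
    by apply: leeDr; rewrite lee_fin /g; lra.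
  + by rewrite lee_fin subr0 /g; lra.
-
  have [i0 vi0] := Hvnz; have [j0 bj0] := Hbnz.
  have Hle : forall i, b i + v i = -oo.
    move=> i; apply/eqP; rewrite -leeNy_eq -Em.
    exact: (le_bigmax _ (fun i => b i + v i) i).
  have ij : i0 != j0.
    apply/eqP => E; move: (Hle i0); rewrite E.
    move: bj0 (Hb j0) vi0 (Hv i0); rewrite E.
    by case: (b j0); case: (v j0).
  apply: (@le_trans _ _ (hilbert v v)).
    apply: ereal_inf_lbound; exists v => //.
    split; first exact: Hv.
    by exists i0, j0; rewrite Em !Hle.
  apply: (@le_trans _ _ ((0 - 0)%R%:E)); first apply: hilbert_le.
  + by rewrite subr0.
  + by move=> i; rewrite add0e.
  + by rewrite subr0 lee_fin; lra.
Qed.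
End Col.

Theorem lemma4p5 (R : realType) (n p : nat) (V : 'I_n -> 'I_p -> \bar R)
  (HV : forall i k, V i k != +oo)
  (Hrow : forall i, exists k, V i k != -oo)
  (Hcol : forall k, exists i, V i k != -oo)
  (lam : \bar R) (Hlam : lam <= 0)
  (b : 'I_n -> \bar R) (Hb : rmax_vec b) (Hbnz : exists i, b i != -oo) :
  (forall i, lam + b i <= Top V b i) <-> distH (cols V) (Hyp b) <= - lam.
Proof.
split.
- move=> H; apply: ge_ereal_sup => _ [a [k _ <-] <-].
  apply: (@col_dir1 R n (fun i => V i k) b lam) => //.
  move=> i vik; apply: (le_trans (H i)); rewrite /Top.
  by apply: bigmin_le_cond.
- move=> H i; rewrite /Top; apply: le_bigmin; first exact: leey.
  move=> k vik.
  apply: (@col_dir2 R n (fun i => V i k) b lam) => //.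
  apply: le_trans H; apply: ereal_sup_ubound.
  by exists (fun i => V i k) => //; exists k.
Qed.
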